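(* Let $k\ge3$ and let $(G,c)$ be the planar $2k$-terminal grid network defined as follows: non-terminal vertices $u_{i,j}$ for $1\le i,j\le k$; terminals $v_1,\dots,v_k,h_1,\dots,h_k$, with $v_j$ adjacent only to $u_{1,j}$ and $h_i$ adjacent only to $u_{i,1}$; grid edges $u_{i,j}u_{i+1,j}$ ($1\le i\le k-1$, $1\le j\le k$) and $u_{i,j}u_{i,j+1}$ ($1\le i\le k$, $1\le j\le k-1$). Costs: terminal edges cost $k^4$; edges $u_{i,k}u_{i+1,k}$ and $u_{k,j}u_{k,j+1}$ cost $k^4$; edges $u_{i,j}u_{i+1,j}$ with $i,j\le k-1$ cost $1$; edges $u_{i,j}u_{i,j+1}$ with $i,j\le k-1$ cost $1-j/k^4$. Let $A_G$ be a cutset-edge incidence matrix of $(G,c)$. Then $\mathrm{rank}(A_G)\ge (k-1)^2$.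
   Context: The terminal set is $Q=\{v_1,\dots,v_k,h_1,\dots,h_k\}$ (so there are $2k$ terminals). A cut $(W,V(G)\setminus W)$ is $S$-separating if $W\cap Q\in\{S,Q\setminus S\}$; its cutset is the set of edges with exactly one endpoint in $W$ and its cost is the total cost of the cutset. Cutset-edge incidence matrix: fix an enumeration $S_1,\dots,S_m$, $m=2^{2k-1}-1$, of representatives of the distinct nontrivial bipartitions of $Q$, and for each a minimum-cost $S_t$-separating cut (ties broken arbitrarily); $A_G\in\{0,1\}^{m\times E(G)}$ has entry $(t,e)$ equal to $1$ iff $e$ lies in the cutset of the chosen cut for $S_t$. *)

(* Defs.v *)
From HB Require Import structures.
From mathcomp Require Import all_boot all_order all_algebra.
Set Implicit Arguments. Unset Strict Implicit. Unset Printing Implicit Defensive.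
Import Order.TTheory GRing.Theory Num.Theory.
Local Open Scope ring_scope.

(* Vertices of the k x k grid network (0-based indices):
   inl (i, j)    = u_{i+1, j+1}
   inr (inl j)   = v_{j+1}
   inr (inr i)   = h_{i+1}                                              *)
Definition gvert (k : nat) : finType := ('I_k * 'I_k + ('I_k + 'I_k))%type.

(* Each edge is stored once, as an ordered pair of its endpoints. *)
Definition is_gedge (k : nat) (e : gvert k * gvert k) : bool :=
  match e with
  | (inl (i, j), inl (i', j')) =>
      ((val i' == (val i).+1)%N && (j' == j)) ||
      ((i' == i) && (val j' == (val j).+1)%N)
  | (inr (inl j), inl (i', j')) => (val i' == 0)%N && (j' == j)
  | (inr (inr i), inl (i', j')) => (i' == i) && (val j' == 0)%N
  | _ => false
  end.

Definition gedge (k : nat) : finType := {e : gvert k * gvert k | is_gedge e}.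

(* The cost function c (values on non-edges are irrelevant). *)
Definition gcost (k : nat) (e : gvert k * gvert k) : rat :=
  let K := (k%:R : rat) ^+ 4 in
  match e with
  | (inr _, _) => K
  | (inl (i, j), inl (i', j')) =>
      if j == j' then                                (* u_{i,j} u_{i+1,j} *)
        (if (val j == k.-1)%N then K else 1)
      else                                           (* u_{i,j} u_{i,j+1} *)
        (if (val i == k.-1)%N then K else 1 - ((val j).+1)%:R / K)
  | _ => 0
  end.

Definition terminals (k : nat) : {set gvert k} := [set x | ~~ is_inl x].

(* S represents a nontrivial bipartition {S, Q \ S} of Q. *)
Definition nontrivial_bip (k : nat) (S : {set gvert k}) : Prop :=
  S \subset terminals k /\ S != set0 /\ S != terminals k.

Definition separating (k : nat) (S W : {set gvert k}) : bool :=
  (W :&: terminals k == S) || (W :&: terminals k == terminals k :\: S).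

Definition cutset (k : nat) (W : {set gvert k}) : {set gedge k} :=
  [set e : gedge k | (fst (val e) \in W) != (snd (val e) \in W)].

Definition cutcost (k : nat) (W : {set gvert k}) : rat :=
  \sum_(e in cutset W) gcost (val e).

Definition min_sep_cut (k : nat) (S W : {set gvert k}) : Prop :=
  separating S W /\
  forall W' : {set gvert k}, separating S W' -> cutcost W <= cutcost W'.

Definition incidence_mx (k m : nat) (W : 'I_m -> {set gvert k})
  : 'M[rat]_(m, #|gedge k|) :=
  \matrix_(t < m, j < #|gedge k|) ((enum_val j \in cutset (W t)) : nat)%:R.

(* Main.v *)
Require Import Defs.
From HB Require Import structures.
From mathcomp Require Import all_boot all_order all_algebra.
From mathcomp Require Import zify ring lra.
Import Order.TTheory GRing.Theory Num.Theory.
Set Implicit Arguments. Unset Strict Implicit. Unset Printing Implicit Defensive.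

Section Grid.
Variable n : nat.
Local Notation k := n.+3.
Local Open Scope ring_scope.

Definition U (a b : 'I_k) : gvert k := inl (a, b).
Definition nx (a : 'I_k) : 'I_k := inord a.+1.
Definition VP a b : gvert k * gvert k := (U a b, U (nx a) b).
Definition HP a b : gvert k * gvert k := (U a b, U a (nx b)).
Definition TV (b : 'I_k) : gvert k * gvert k := (inr (inl b), U ord0 b).
Definition TH (a : 'I_k) : gvert k * gvert k := (inr (inr a), U a ord0).
Definition cutp (X : {set gvert k}) (p : gvert k * gvert k) :=
  (p.1 \in X) != (p.2 \in X).
Definition Gc X p : rat := if cutp X p then gcost p else 0.

Definition Idx := (('I_k * 'I_k) * bool + ('I_k + 'I_k))%type.
Definition fI (x : Idx) : gvert k * gvert k :=
  match x with
  | inl ((a, b), false) => VP a b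
  | inl ((a, b), true) => HP a b
  | inr (inl b) => TV b
  | inr (inr a) => TH a
  end.
Definition validI (x : Idx) : bool :=
  match x with
  | inl ((a, b), false) => (a.+1 < k)%N
  | inl ((a, b), true) => (b.+1 < k)%N
  | _ => true
  end.

Lemma nxE (a : 'I_k) : (a.+1 < k)%N -> val (nx a) = a.+1.
Proof. by move=> h; apply: inordK. Qed.

Lemma fI_edge x : validI x -> is_gedge (fI x).
Proof.
case: x => [[[a b] []]|[b|a]] /= h.
- by rewrite /= eqxx nxE // eqxx orbT.
- by rewrite /= eqxx nxE // eqxx.
- by rewrite /= !eqxx.
- by rewrite /= !eqxx.
Qed.

Lemma fI_inj : {in validI &, injective fI}.
Proof.
move=> [[[a b] []]|[b|a]] [[[a' b'] []]|[b'|a']] //=;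
  rewrite /VP /HP /TV /TH /U => h1 h2 [] //; 
  try solve [move=> e1 e2 *; subst; done]; try solve [move=> e1 *; subst; done].
all: move=> *; subst; exfalso;
  repeat match goal with H : nx _ = _ |- _ => move/(congr1 val): H; rewrite nxE // => ? end;
  repeat match goal with H : _ = nx _ |- _ => move/(congr1 val): H; rewrite nxE // => ? end;
  repeat match goal with H : _ \in validI |- _ => move: H; rewrite /in_mem /= => ? end; simpl in *; lia.
Qed.

Lemma edge_image : [set val e | e in [set: gedge k]] = [set fI x | x in validI].
Proof.
apply/setP=> p; apply/imsetP/imsetP.
- case=> [[[u w] He]] _ /= ->.
  move: He; case: u => [[a b]|[b|a]]; case: w => [[a' b']|[b'|a']] //=.
  + case/orP=> /andP[/eqP ha /eqP hb].
    * exists (inl ((a, b), false)); first by rewrite /in_mem /=; move: (ltn_ord a') (ltn_ord b'); simpl in *; lia.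
      rewrite /VP /U hb; congr (_, inl (_, _)); apply/val_inj; rewrite nxE /=; move: (ltn_ord a') (ltn_ord b'); simpl in *; lia.
    * exists (inl ((a, b), true)); first by rewrite /in_mem /=; move: (ltn_ord a') (ltn_ord b'); simpl in *; lia.
      rewrite /HP /U ha; congr (_, inl (_, _)); apply/val_inj; rewrite nxE /=; move: (ltn_ord a') (ltn_ord b'); simpl in *; lia.
  + move=> /andP[/eqP ha /eqP hb]; exists (inr (inl b)) => //.
    by rewrite /TV /U hb; congr (_, inl (_, _)); apply/val_inj.
  + move=> /andP[/eqP ha /eqP hb]; exists (inr (inr a)) => //.
    by rewrite /TH /U ha; congr (_, inl (_, _)); apply/val_inj.
- case=> x hx ->; exists (Sub (fI x) (fI_edge hx)) => //.
Qed.


Definition vt X (a b : 'I_k) : rat := if (a.+1 < k)%N then Gc X (VP a b) else 0.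
Definition ht X (a b : 'I_k) : rat := if (b.+1 < k)%N then Gc X (HP a b) else 0.
Definition Fd X : rat := \sum_(a : 'I_k) \sum_(b : 'I_k) (vt X a b + ht X a b)
  + \sum_b Gc X (TV b) + \sum_a Gc X (TH a).

Lemma cutcostE X : cutcost X = Fd X.
Proof.
rewrite /cutcost.
have -> : \sum_(e in cutset X) gcost (val e) = \sum_(e in [set: gedge k]) Gc X (val e).
  rewrite [LHS]big_mkcond [RHS]big_mkcond /=; apply: eq_bigr => e _.
  by rewrite /Gc /cutp !inE.
rewrite -(big_imset _ (in2W val_inj)) /= edge_image big_imset /=; last exact: fI_inj.
rewrite big_mkcond big_sumType /= big_sumType /= /Fd -addrA; congr (_ + _).
rewrite pair_bigA /=.
transitivity (\sum_(p : 'I_k * 'I_k) \sum_(c : bool)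
   (if validI (inl (p, c)) then Gc X (fI (inl (p, c))) else 0)).
  by rewrite pair_bigA /=; apply: eq_bigr => -[[a b] c] _.
apply: eq_bigr => -[a b] _; rewrite big_bool /= addrC.
by [].
Qed.

Definition KK : rat := (k%:R : rat) ^+ 4.

Lemma KK_gt0 : 0 < KK.
Proof. by rewrite /KK exprn_gt0 // ltr0n. Qed.

Lemma frac_le1 (j : nat) : (j <= k)%N -> j%:R / KK <= 1.
Proof.
move=> hj; rewrite ler_pdivrMr ?KK_gt0 // mul1r /KK -natrX ler_nat.
apply: (leq_trans hj); rewrite -{1}(expn1 k) leq_pexp2l //.
Qed.

Lemma gcost_ge0 (p : gvert k * gvert k) : 0 <= gcost p.
Proof.
have K0 : 0 <= (k%:R : rat) ^+ 4 by rewrite exprn_ge0 // ler0n.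
case: p => [[[a b]|[b|a]] [[a' b']|w]] //=;
  case: ifP => _; case: ifP => _ //; rewrite subr_ge0; apply: frac_le1; exact: ltn_ord.
Qed.

Lemma Gc_ge0 X p : 0 <= Gc X p.
Proof. by rewrite /Gc; case: ifP => // _; apply: gcost_ge0. Qed.

Lemma gcost_VP (a b : 'I_k) : gcost (VP a b) = if (val b == k.-1)%N then KK else 1.
Proof. by rewrite /= eqxx. Qed.

Lemma gcost_HP (a b : 'I_k) : (b.+1 < k)%N ->
  gcost (HP a b) = if (val a == k.-1)%N then KK else 1 - (b.+1)%:R / KK.
Proof.
move=> hb /=; have -> : (b == nx b) = false.
  by apply/negbTE/eqP => /(congr1 val); rewrite nxE //= => h; lia.
by [].
Qed.

Lemma gcost_TV b : gcost (TV b) = KK. Proof. by []. Qed.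
Lemma gcost_TH a : gcost (TH a) = KK. Proof. by []. Qed.

Lemma sum_ge_term (I : finType) (F : I -> rat) i :
  (forall j, 0 <= F j) -> F i <= \sum_j F j.
Proof. by move=> h; rewrite (bigD1 i) //= lerDl; apply: sumr_ge0. Qed.

Lemma vt_ge0 X a b : 0 <= vt X a b.
Proof. by rewrite /vt; case: ifP => // _; apply: Gc_ge0. Qed.
Lemma ht_ge0 X a b : 0 <= ht X a b.
Proof. by rewrite /ht; case: ifP => // _; apply: Gc_ge0. Qed.

Lemma Fd_split X : \sum_(a : 'I_k) \sum_(b : 'I_k) (vt X a b + ht X a b) <= Fd X.
Proof.
rewrite /Fd -addrA lerDl; apply: addr_ge0; apply: sumr_ge0 => *; exact: Gc_ge0.
Qed.

Lemma Fd_ge_vht X a b : vt X a b + ht X a b <= Fd X.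
Proof.
have p0 : forall a' b', 0 <= vt X a' b' + ht X a' b'.
  by move=> a' b'; rewrite addr_ge0 ?vt_ge0 ?ht_ge0.
have h1 := @sum_ge_term _ (fun a' => \sum_b' (vt X a' b' + ht X a' b')) a
  (fun a' => sumr_ge0 _ (fun b' _ => p0 a' b')).
have h2 := @sum_ge_term _ (fun b' => vt X a b' + ht X a b') b (p0 a).
exact: le_trans h2 (le_trans h1 (Fd_split X)).
Qed.

Lemma Fd_ge_vt X a b : vt X a b <= Fd X.
Proof. by apply: le_trans (Fd_ge_vht X a b); rewrite lerDl ht_ge0. Qed.

Lemma Fd_ge_ht X a b : ht X a b <= Fd X.
Proof. by apply: le_trans (Fd_ge_vht X a b); rewrite lerDr vt_ge0. Qed.

Lemma Fd_ge_TV X b : Gc X (TV b) <= Fd X.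
Proof.
rewrite /Fd -addrA addrCA.
apply: le_trans (@sum_ge_term _ (fun b' => Gc X (TV b')) b (fun b' => Gc_ge0 X (TV b'))) _.
rewrite lerDl; apply: addr_ge0; apply: sumr_ge0 => *; try exact: Gc_ge0.
apply: sumr_ge0 => *; by rewrite addr_ge0 ?vt_ge0 ?ht_ge0.
Qed.

Lemma Fd_ge_TH X a : Gc X (TH a) <= Fd X.
Proof.
rewrite /Fd.
apply: le_trans (@sum_ge_term _ (fun a' => Gc X (TH a')) a (fun a' => Gc_ge0 X (TH a'))) _.
rewrite lerDr; apply: addr_ge0; apply: sumr_ge0 => *; try exact: Gc_ge0.
apply: sumr_ge0 => *; by rewrite addr_ge0 ?vt_ge0 ?ht_ge0.
Qed.


Lemma const_path (f : nat -> bool) m :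
  (forall a, (a < m)%N -> f a = f a.+1) -> forall a, (a <= m)%N -> f a = f 0.
Proof.
move=> h; elim=> [|a IH] // ha; rewrite -h; last by lia.
by apply: IH; lia.
Qed.

Lemma cross (f : nat -> bool) m : f 0 != f m -> exists2 a, (a < m)%N & f a != f a.+1.
Proof.
elim: m => [|m IH]; first by rewrite eqxx.
move=> h; case: (eqVneq (f m) (f m.+1)) => e; last by exists m.
have h' : f 0 != f m by rewrite e.
by have [a ha fa] := IH h'; exists a => //; lia.
Qed.

Lemma sum_le_cst m (j : nat) (x : rat) :
  \sum_(b < m) (if (b <= j)%N then x else 0) = (minn m j.+1)%:R * x.
Proof.
elim: m => [|m IH]; first by rewrite big_ord0 mul0r.
rewrite big_ord_recr /= IH; case: ifP => h; move: h; rewrite /= => h.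
  have -> : minn m.+1 j.+1 = (minn m j.+1).+1 by lia.
  by rewrite -[(minn m j.+1).+1]addn1 natrD mulrDl mul1r.
have -> : minn m.+1 j.+1 = minn m j.+1 by lia.
by rewrite addr0.
Qed.

Lemma sum_eq1 (I : finType) (i0 : I) (x : rat) :
  \sum_(a : I) (if a == i0 then x else 0) = x.
Proof. by rewrite -big_mkcond big_pred1_eq. Qed.


Lemma gcost_VP1 (a b : 'I_k) : (b.+1 < k)%N -> gcost (VP a b) = 1.
Proof. by move=> hb; rewrite gcost_VP; case: eqP => // e; simpl in *; lia. Qed.
Lemma gcost_HP1 (a b : 'I_k) : (a.+1 < k)%N -> (b.+1 < k)%N ->
  gcost (HP a b) = 1 - (b.+1)%:R / KK.
Proof. by move=> ha hb; rewrite gcost_HP //; case: eqP => // e; simpl in *; lia. Qed.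

Section Main.
Variables i j : nat.
Hypothesis hi : (i.+1 < k)%N.
Hypothesis hj : (j.+1 < k)%N.

Definition Sij : {set gvert k} := [set x : gvert k |
  match x with inl _ => false | inr (inl b) => (b <= j)%N | inr (inr a) => (a <= i)%N end].
Definition Rij : {set gvert k} := [set x : gvert k |
  match x with inl (a, b) => (a <= i)%N && (b <= j)%N
  | inr (inl b) => (b <= j)%N | inr (inr a) => (a <= i)%N end].
Definition Bij : rat := (j.+1)%:R + (i.+1)%:R * (1 - (j.+1)%:R / KK).

Variable X : {set gvert k}.
Hypothesis hX : X :&: terminals k = Sij.
Hypothesis hB : Fd X <= Bij.

Lemma memV b : (inr (inl b) \in X) = (b <= j)%N.
Proof. by move/setP: hX => /(_ (inr (inl b))); rewrite !inE /= andbT. Qed.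
Lemma memH a : (inr (inr a) \in X) = (a <= i)%N.
Proof. by move/setP: hX => /(_ (inr (inr a))); rewrite !inE /= andbT. Qed.

Lemma Bij_lt : Bij < KK.
Proof.
rewrite /Bij /KK.
have h1 : (j.+1)%:R / KK <= 1 by apply: frac_le1; lia.
have h2 : (1 - (j.+1)%:R / KK) <= 1 by rewrite lerBlDr lerDl; apply: divr_ge0; rewrite ?ler0n ?ltW ?KK_gt0.
apply: (@le_lt_trans _ _ ((j.+1)%:R + (i.+1)%:R)).
  rewrite lerD2l -{2}(mulr1 (i.+1)%:R); apply: ler_wpM2l => //; exact: ler0n.
rewrite -natrD -natrX ltr_nat.
rewrite !expnS expn0 muln1; nia.
Qed.

Lemma no_heavy p : cutp X p -> gcost p = KK -> Gc X p <= Fd X -> False.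
Proof.
move=> c g h; have := le_lt_trans (le_trans h hB) Bij_lt.
by rewrite /Gc c g ltxx.
Qed.

Lemma noTV b : ~~ cutp X (TV b).
Proof. by apply/negP => c; apply: (no_heavy c (gcost_TV b) (Fd_ge_TV X b)). Qed.
Lemma noTH a : ~~ cutp X (TH a).
Proof. by apply/negP => c; apply: (no_heavy c (gcost_TH a) (Fd_ge_TH X a)). Qed.

Lemma noVK (a : 'I_k) : (a.+1 < k)%N -> ~~ cutp X (VP a ord_max).
Proof.
move=> ha; apply/negP => c; apply: (no_heavy c); first by rewrite gcost_VP eqxx.
by have := Fd_ge_vt X a ord_max; rewrite /vt ha.
Qed.

Lemma noHK (b : 'I_k) : (b.+1 < k)%N -> ~~ cutp X (HP ord_max b).
Proof.
move=> hb; apply/negP => c; apply: (no_heavy c); first by rewrite gcost_HP // eqxx.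
by have := Fd_ge_ht X ord_max b; rewrite /ht hb.
Qed.

Definition colf (b : 'I_k) (a : nat) := U (inord a) b \in X.
Definition rowf (a : 'I_k) (b : nat) := U a (inord b) \in X.

Lemma cutV (a : nat) b : (a.+1 < k)%N -> cutp X (VP (inord a) b) = (colf b a != colf b a.+1).
Proof. by move=> ha; rewrite /cutp /VP /nx /colf /= inordK //; lia. Qed.
Lemma cutH a (b : nat) : (b.+1 < k)%N -> cutp X (HP a (inord b)) = (rowf a b != rowf a b.+1).
Proof. by move=> hb; rewrite /cutp /HP /nx /rowf /= inordK //; lia. Qed.

Lemma U0 b : (U ord0 b \in X) = (b <= j)%N.
Proof. by have := noTV b; rewrite /cutp /= memV negbK => /eqP ->. Qed.
Lemma Ua0 a : (U a ord0 \in X) = (a <= i)%N.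
Proof. by have := noTH a; rewrite /cutp /= memH negbK => /eqP ->. Qed.

Lemma inord0' : inord 0 = ord0 :> 'I_k.
Proof. by apply/val_inj; rewrite /= inordK. Qed.
Lemma inordmax : inord k.-1 = ord_max :> 'I_k.
Proof. by apply/val_inj; rewrite /= inordK. Qed.

Lemma lastrow b : U ord_max b \notin X.
Proof.
have hc : forall b', (b' <= k.-1)%N -> rowf ord_max b' = rowf ord_max 0.
  apply: const_path => b' hb'; apply/eqP; rewrite -[_ == _]negbK -cutH; last by lia.
  by apply: noHK; rewrite inordK; lia.
have := hc b; rewrite /rowf inord_val inord0' Ua0 => -> //; last by have := ltn_ord b; lia.
by rewrite /=; lia.
Qed.

Lemma lastcol a : U a ord_max \notin X.
Proof.
have hc : forall a', (a' <= k.-1)%N -> colf ord_max a' = colf ord_max 0.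
  apply: const_path => a' ha'; apply/eqP; rewrite -[_ == _]negbK -cutV; last by lia.
  by apply: noVK; rewrite inordK; lia.
have := hc a; rewrite /colf inord_val inord0' U0 => -> //; last by have := ltn_ord a; lia.
by rewrite /=; lia.
Qed.

Lemma col_cut (b : 'I_k) : (b <= j)%N -> exists2 a : 'I_k, (a.+1 < k)%N & cutp X (VP a b).
Proof.
move=> hb; have : colf b 0 != colf b k.-1.
  by rewrite /colf inord0' inordmax U0 hb (negbTE (lastrow b)).
case/cross => a ha hne; exists (inord a); first by rewrite inordK; lia.
by rewrite cutV //; lia.
Qed.

Lemma row_cut (a : 'I_k) : (a <= i)%N -> exists2 b : 'I_k, (b.+1 < k)%N & cutp X (HP a b).
Proof.
move=> ha; have : rowf a 0 != rowf a k.-1.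
  by rewrite /rowf inord0' inordmax Ua0 ha (negbTE (lastcol a)).
case/cross => b hb hne; exists (inord b); first by rewrite inordK; lia.
by rewrite cutH //; lia.
Qed.


Definition colc (b : 'I_k) : rat :=
  \sum_(a : 'I_k) (if (a.+1 < k)%N && cutp X (VP a b) then 1 else 0).
Definition rowc (a : 'I_k) : rat :=
  \sum_(b : 'I_k) (if (b.+1 < k)%N && cutp X (HP a b) then 1 else 0).
Definition Vs : rat := \sum_(b : 'I_k) (if (b.+1 < k)%N then colc b else 0).
Definition Hs : rat := \sum_(a : 'I_k) (if (a.+1 < k)%N then rowc a else 0).
Definition hw (a b : 'I_k) : rat :=
  if (b.+1 < k)%N && cutp X (HP a b) then 1 - (b.+1)%:R / KK else 0.
Definition Hw : rat := \sum_(a : 'I_k) (if (a.+1 < k)%N then \sum_(b : 'I_k) hw a b else 0).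

Lemma L1 : Vs + Hw <= Fd X.
Proof.
apply: le_trans (Fd_split X).
have -> : \sum_(a : 'I_k) \sum_(b : 'I_k) (vt X a b + ht X a b) =
   \sum_(a : 'I_k) \sum_(b : 'I_k) vt X a b + \sum_(a : 'I_k) \sum_(b : 'I_k) ht X a b.
  by rewrite -big_split; apply: eq_bigr => a _; rewrite -big_split.
apply: lerD.
  rewrite exchange_big /=; apply: ler_sum => b _; case: ifP => hb; last first.
    by apply: sumr_ge0 => *; exact: vt_ge0.
  apply: ler_sum => a _; rewrite /vt /Gc.
  by case: (a.+1 < k)%N; case: (cutp X (VP a b)) => //; rewrite gcost_VP1.
apply: ler_sum => a _; case: ifP => ha; last first.
  by apply: sumr_ge0 => *; exact: ht_ge0.
apply: ler_sum => b _; rewrite /hw /ht /Gc.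
by case hb: (b.+1 < k)%N; case: (cutp X (HP a b)) => //; rewrite gcost_HP1.
Qed.

Lemma ind_ge0 (c : bool) (x : rat) : 0 <= x -> 0 <= (if c then x else 0).
Proof. by case: c. Qed.

Lemma colc_ge0 b : 0 <= colc b.
Proof. by apply: sumr_ge0 => *; apply: ind_ge0. Qed.
Lemma rowc_ge0 a : 0 <= rowc a.
Proof. by apply: sumr_ge0 => *; apply: ind_ge0. Qed.

Lemma colc_ge (a b : 'I_k) : (a.+1 < k)%N -> cutp X (VP a b) -> 1 <= colc b.
Proof.
move=> ha c; have := @sum_ge_term _
  (fun a' : 'I_k => if (a'.+1 < k)%N && cutp X (VP a' b) then 1 else 0 : rat) a
  (fun _ => ind_ge0 _ ler01).
by rewrite /= ha c.
Qed.
Lemma rowc_ge (a b : 'I_k) : (b.+1 < k)%N -> cutp X (HP a b) -> 1 <= rowc a.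
Proof.
move=> hb c; have := @sum_ge_term _
  (fun b' : 'I_k => if (b'.+1 < k)%N && cutp X (HP a b') then 1 else 0 : rat) b
  (fun _ => ind_ge0 _ ler01).
by rewrite /= hb c.
Qed.

Lemma sumJ : \sum_(b : 'I_k) (if (b <= j)%N then 1 else 0 : rat) = (j.+1)%:R.
Proof. by rewrite sum_le_cst mulr1; congr (_ %:R); lia. Qed.
Lemma sumI : \sum_(a : 'I_k) (if (a <= i)%N then 1 else 0 : rat) = (i.+1)%:R.
Proof. by rewrite sum_le_cst mulr1; congr (_ %:R); lia. Qed.

Lemma Vs_ge_gen (f : 'I_k -> rat) :
  (forall b : 'I_k, (b.+1 < k)%N -> (if (b <= j)%N then 1 else 0) + f b <= colc b) ->
  (forall b : 'I_k, ~~ (b.+1 < k)%N -> f b <= 0) ->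
  (j.+1)%:R + \sum_b f b <= Vs.
Proof.
move=> h1 h2; rewrite -sumJ -big_split; apply: ler_sum => b _.
case hb: (b.+1 < k)%N; first exact: h1.
have -> : (b <= j)%N = false by apply/negbTE; lia.
by rewrite /= add0r h2 // hb.
Qed.

Lemma Hs_ge_gen (f : 'I_k -> rat) :
  (forall a : 'I_k, (a.+1 < k)%N -> (if (a <= i)%N then 1 else 0) + f a <= rowc a) ->
  (forall a : 'I_k, ~~ (a.+1 < k)%N -> f a <= 0) ->
  (i.+1)%:R + \sum_a f a <= Hs.
Proof.
move=> h1 h2; rewrite -sumI -big_split; apply: ler_sum => a _.
case ha: (a.+1 < k)%N; first exact: h1.
have -> : (a <= i)%N = false by apply/negbTE; lia.
by rewrite /= add0r h2 // ha.
Qed.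

Lemma Vs_ge : (j.+1)%:R <= Vs.
Proof.
have := @Vs_ge_gen (fun _ => 0); rewrite big1 // addr0; apply => // b hb.
rewrite addr0; case: ifP => hbj; last exact: colc_ge0.
by have [a ha c] := col_cut hbj; apply: colc_ge c.
Qed.

Lemma Hs_ge : (i.+1)%:R <= Hs.
Proof.
have := @Hs_ge_gen (fun _ => 0); rewrite big1 // addr0; apply => // a ha.
rewrite addr0; case: ifP => hai; last exact: rowc_ge0.
by have [b hb c] := row_cut hai; apply: rowc_ge c.
Qed.

Definition c0 : rat := 1 - (k.-1)%:R / KK.

Lemma c0_ge0 : 0 <= c0.
Proof. by rewrite subr_ge0 frac_le1 //; lia. Qed.

Lemma Hw_ge : Hs * c0 <= Hw.
Proof.
rewrite /Hs mulr_suml; apply: ler_sum => a _; case: ifP => ha; last by rewrite mul0r.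
rewrite mulr_suml; apply: ler_sum => b _; rewrite /hw; case: ifP => h; last by rewrite mul0r.
rewrite mul1r /c0 lerD2l lerN2 ler_pM2r ?invr_gt0 ?KK_gt0 // ler_nat.
by case/andP: h; lia.
Qed.

Lemma L2 : Vs + Hs * c0 <= Fd X.
Proof. by apply: le_trans L1; rewrite lerD2l Hw_ge. Qed.

Lemma numE1 : Bij < (j.+1)%:R + 1 + (i.+1)%:R * c0.
Proof.
have h1 : (i.+1)%:R * ((k.-1)%:R / KK) < 1.
  rewrite mulrA ltr_pdivrMr ?KK_gt0 // mul1r -natrM /KK -natrX ltr_nat.
  rewrite !expnS expn0 muln1; nia.
have h2 : 0 <= (i.+1)%:R * ((j.+1)%:R / KK).
  by rewrite mulr_ge0 ?divr_ge0 ?ler0n ?ltW ?KK_gt0.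
rewrite /Bij /c0 !mulrBr !mulr1; lra.
Qed.

Lemma numE3 : Bij < (j.+1)%:R + ((i.+1)%:R + 1) * c0.
Proof.
have h1 : ((i.+1)%:R + 1) * ((k.-1)%:R / KK) < 1.
  rewrite natr1 mulrA ltr_pdivrMr ?KK_gt0 // mul1r -natrM /KK -natrX ltr_nat.
  rewrite !expnS expn0 muln1; nia.
have h2 : 0 <= (i.+1)%:R * ((j.+1)%:R / KK).
  by rewrite mulr_ge0 ?divr_ge0 ?ler0n ?ltW ?KK_gt0.
rewrite /Bij /c0 !mulrBr !mulr1 mulrDl mul1r; lra.
Qed.

Lemma VsE1 : (j.+1)%:R + 1 <= Vs -> False.
Proof.
move=> h; have := le_trans (le_trans (lerD h (ler_wpM2r c0_ge0 Hs_ge)) L2) hB.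
by rewrite leNgt numE1.
Qed.

Lemma HsE3 : (i.+1)%:R + 1 <= Hs -> False.
Proof.
move=> h; have := le_trans (le_trans (lerD Vs_ge (ler_wpM2r c0_ge0 h)) L2) hB.
by rewrite leNgt numE3.
Qed.


Lemma sum_eqF (I : finType) (i0 : I) (F : I -> rat) :
  \sum_(a : I) (if a == i0 then F a else 0) = F i0.
Proof. by rewrite -big_mkcond big_pred1_eq. Qed.

Lemma noVright (a b : 'I_k) : (j < b)%N -> (b.+1 < k)%N -> (a.+1 < k)%N -> ~~ cutp X (VP a b).
Proof.
move=> hjb hb ha; apply/negP => c; apply: VsE1.
have := @Vs_ge_gen (fun b' => if b' == b then 1 else 0); rewrite sum_eq1; apply.
  move=> b' hb'; case: (eqVneq b' b) => [->|ne].
    by rewrite ifF ?add0r; [apply: colc_ge c | apply/negbTE; lia].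
  rewrite /= addr0; case: ifP => hbj; last exact: colc_ge0.
  by have [a' ha' c'] := col_cut hbj; apply: colc_ge c'.
by move=> b' hb'; case: (eqVneq b' b) => [e|_] //; move: hb'; rewrite e hb.
Qed.

Lemma noHbelow (a b : 'I_k) : (i < a)%N -> (a.+1 < k)%N -> (b.+1 < k)%N -> ~~ cutp X (HP a b).
Proof.
move=> hia ha hb; apply/negP => c; apply: HsE3.
have := @Hs_ge_gen (fun a' => if a' == a then 1 else 0); rewrite sum_eq1; apply.
  move=> a' ha'; case: (eqVneq a' a) => [->|ne].
    by rewrite ifF ?add0r; [apply: rowc_ge c | apply/negbTE; lia].
  rewrite /= addr0; case: ifP => hai; last exact: rowc_ge0.
  by have [b' hb' c'] := row_cut hai; apply: rowc_ge c'.
by move=> a' ha'; case: (eqVneq a' a) => [e|_] //; move: ha'; rewrite e ha.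
Qed.

Lemma colout (a b : 'I_k) : (j < b)%N -> U a b \notin X.
Proof.
move=> hjb; case hb: (b.+1 < k)%N; last first.
  have -> : b = ord_max by apply/val_inj => /=; have := ltn_ord b; lia.
  exact: lastcol.
have hc : forall a', (a' <= k.-1)%N -> colf b a' = colf b 0.
  apply: const_path => a' ha'; apply/eqP; rewrite -[_ == _]negbK -cutV; last by lia.
  by apply: noVright => //; rewrite inordK; lia.
have := hc a; rewrite /colf inord_val inord0' U0 => -> //; last by have := ltn_ord a; lia.
by rewrite /=; lia.
Qed.

Lemma rowout (a b : 'I_k) : (i < a)%N -> U a b \notin X.
Proof.
move=> hia; case ha: (a.+1 < k)%N; last first.
  have -> : a = ord_max by apply/val_inj => /=; have := ltn_ord a; lia.
  exact: lastrow.
have hc : forall b', (b' <= k.-1)%N -> rowf a b' = rowf a 0.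
  apply: const_path => b' hb'; apply/eqP; rewrite -[_ == _]negbK -cutH; last by lia.
  by apply: noHbelow => //; rewrite inordK; lia.
have := hc b; rewrite /rowf inord_val inord0' Ua0 => -> //; last by have := ltn_ord b; lia.
by rewrite /=; lia.
Qed.

Definition ii : 'I_k := inord i.
Definition jj : 'I_k := inord j.
Lemma iiE : val ii = i. Proof. by rewrite /= inordK //; lia. Qed.
Lemma jjE : val jj = j. Proof. by rewrite /= inordK //; lia. Qed.

Lemma HP_cut_le (a b : 'I_k) : (b.+1 < k)%N -> cutp X (HP a b) -> (b <= j)%N.
Proof.
move=> hb c; rewrite leqNgt; apply/negP => hjb; move: c.
by rewrite /cutp /HP /= (negbTE (colout _ hjb)) (negbTE (colout _ _)) // nxE //; lia.
Qed.

Lemma Uij_in : U ii jj \in X.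
Proof.
apply/negPn/negP => hn.
pose c1 : rat := 1 - (j.+1)%:R / KK.
have c1_ge0 : 0 <= c1 by rewrite subr_ge0 frac_le1 //; lia.
have hw_ge : forall a : 'I_k, (a.+1 < k)%N ->
    rowc a * c1 + (if a == ii then rowc a / KK else 0) <= \sum_b hw a b.
  move=> a ha; rewrite /rowc mulr_suml; case: (eqVneq a ii) => [ea|na].
    rewrite /= mulr_suml -big_split; apply: ler_sum => b _; rewrite /hw.
    rewrite /=; case: ifP => h; last by rewrite !mul0r addr0.
    case/andP: h => hb c; have hbj := HP_cut_le hb c.
    have hbj' : (b < j)%N.
      rewrite ltn_neqAle hbj andbT; apply/eqP => e; move: c.
      rewrite /cutp /HP /= ea (_ : b = jj); last by apply/val_inj; rewrite jjE.
      by rewrite (negbTE hn) (negbTE (colout _ _)) // nxE jjE //; lia.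
    have hl : (b.+1)%:R * KK^-1 + KK^-1 <= (j.+1)%:R * KK^-1.
      rewrite -[X in _ + X <= _]mul1r -mulrDl natr1 ler_pM2r ?invr_gt0 ?KK_gt0 //.
      rewrite ler_nat; lia.
    rewrite !mul1r /c1; lra.
  rewrite /= addr0; apply: ler_sum => b _; rewrite /hw.
  case: ifP => h; last by rewrite mul0r.
  case/andP: h => hb c; have hbj := HP_cut_le hb c.
  rewrite mul1r /c1 lerD2l lerN2 ler_pM2r ?invr_gt0 ?KK_gt0 // ler_nat; lia.
have hHw : Hs * c1 + rowc ii / KK <= Hw.
  rewrite /Hs mulr_suml -(sum_eqF ii (fun a => rowc a / KK)) -big_split.
  apply: ler_sum => a _; case ha: (a.+1 < k)%N; first by rewrite /=; apply: hw_ge.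
  rewrite /= mul0r add0r; case: eqP => // e; move: ha; rewrite e iiE; lia.
have r1 : 1 <= rowc ii.
  have hii : (ii <= i)%N by rewrite iiE.
  by have [b hb c] := row_cut hii; apply: rowc_ge c.
have kinv : 0 <= KK^-1 by rewrite invr_ge0 ltW ?KK_gt0.
have := le_trans (lerD Vs_ge (le_trans (lerD (ler_wpM2r c1_ge0 Hs_ge)
          (ler_wpM2r kinv r1)) hHw)) L1.
move=> h; have h2 := le_trans h hB.
have kpos : 0 < 1 / KK by rewrite mul1r invr_gt0 KK_gt0.
move: h2; rewrite /Bij -/c1; lra.
Qed.


Lemma VPij_cut : cutp X (VP ii jj).
Proof.
have h : (i < nx ii)%N by rewrite nxE iiE //.
by rewrite /cutp /VP /= Uij_in (negbTE (rowout _ h)).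
Qed.

Lemma noVcol (a : 'I_k) : (a.+1 < k)%N -> (a != i :> nat) -> ~~ cutp X (VP a jj).
Proof.
move=> ha ai; apply/negP => c; apply: VsE1.
have := @Vs_ge_gen (fun b => if b == jj then 1 else 0); rewrite sum_eq1; apply.
  move=> b hb; case: (eqVneq b jj) => [->|ne].
    rewrite jjE leqnn /=.
    have <- : \sum_(a' : 'I_k) ((if a' == a then 1 else 0) + (if a' == ii then 1 else 0)) = 1 + 1 :> rat.
      by rewrite big_split /= !sum_eq1.
    apply: ler_sum => a' _; case: (eqVneq a' a) => [->|na].
      have -> : (a == ii) = false by apply/negbTE/eqP => e; move: ai; rewrite e iiE eqxx.
      by rewrite /= ha c addr0.
    case: (eqVneq a' ii) => [->|ni]; last by rewrite /= addr0; apply: ind_ge0.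
    by rewrite /= add0r VPij_cut iiE hi.
  rewrite /= addr0; case: ifP => hbj; last exact: colc_ge0.
  by have [a' ha' c'] := col_cut hbj; apply: colc_ge c'.
by move=> b hb; case: (eqVneq b jj) => [e|_] //; move: hb; rewrite e jjE hj.
Qed.

Lemma main_cut : cutp X (VP ii jj) /\
  (forall a b : 'I_k, (a.+1 < k)%N -> (b.+1 < k)%N -> (j <= b)%N ->
     (a != i :> nat) || (b != j :> nat) -> ~~ cutp X (VP a b)).
Proof.
split; first exact: VPij_cut.
move=> a b ha hb hjb hne; case: (ltngtP j b) => h.
- exact: noVright.
- lia.
- have -> : b = jj by apply/val_inj; rewrite jjE.
  apply: noVcol => //; move: hne; rewrite -h eqxx orbF //.
Qed.

End Main.

Section RCost.
Variables i j : nat.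
Hypothesis hi : (i.+1 < k)%N.
Hypothesis hj : (j.+1 < k)%N.

Lemma vtR (a b : 'I_k) : vt (Rij i j) a b = if (val a == i) && (b <= j)%N then 1 else 0.
Proof.
rewrite /vt /Gc; case ha: (a.+1 < k)%N; last first.
  by case: eqP => //= e; move: ha; rewrite e hi.
have -> : cutp (Rij i j) (VP a b) = ((val a == i) && (b <= j))%N.
  rewrite /cutp /VP /= !inE /= nxE //.
  by case: (b <= j)%N; rewrite ?andbT ?andbF //=; case: ltngtP.
by case: ifP => // /andP[_ hb]; rewrite gcost_VP1 //; lia.
Qed.

Lemma htR (a b : 'I_k) : ht (Rij i j) a b = if (val b == j) && (a <= i)%N then 1 - (j.+1)%:R / KK else 0.
Proof.
rewrite /ht /Gc; case hb: (b.+1 < k)%N; last first.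
  by case: eqP => //= e; move: hb; rewrite e hj.
have -> : cutp (Rij i j) (HP a b) = ((val b == j) && (a <= i))%N.
  rewrite /cutp /HP /= !inE /= nxE //.
  by case: (a <= i)%N; rewrite ?andbT ?andbF //=; case: ltngtP.
case: ifP => // /andP[/eqP eb ha]; rewrite gcost_HP1 ?eb //; lia.
Qed.

Lemma FR : Fd (Rij i j) = Bij i j.
Proof.
rewrite /Fd.
have iE : val (ii i) = i by rewrite /= inordK //; lia.
have jE : val (jj j) = j by rewrite /= inordK //; lia.
have -> : \sum_b Gc (Rij i j) (TV b) = 0.
  by apply: big1 => b _; rewrite /Gc /cutp /TV /= !inE /= ?andTb eqxx.
have -> : \sum_a Gc (Rij i j) (TH a) = 0.
  by apply: big1 => a _; rewrite /Gc /cutp /TH /= !inE /= ?andbT eqxx.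
rewrite !addr0.
have -> : \sum_(a : 'I_k) \sum_(b : 'I_k) (vt (Rij i j) a b + ht (Rij i j) a b) =
   \sum_(a : 'I_k) \sum_(b : 'I_k) vt (Rij i j) a b + \sum_(a : 'I_k) \sum_(b : 'I_k) ht (Rij i j) a b.
  by rewrite -big_split; apply: eq_bigr => a _; rewrite -big_split.
have -> : \sum_(a : 'I_k) \sum_(b : 'I_k) vt (Rij i j) a b =
          \sum_(a : 'I_k) (if a == ii i then (j.+1)%:R else 0).
  apply: eq_bigr => a _; under eq_bigr do rewrite vtR.
  have -> : (a == ii i) = (val a == i) by rewrite -val_eqE iE.
  case: eqP => _ /=; last by rewrite big1.
  by rewrite sum_le_cst mulr1; congr (_ %:R); lia.
have -> : \sum_(a : 'I_k) \sum_(b : 'I_k) ht (Rij i j) a b =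
          \sum_(a : 'I_k) (if (a <= i)%N then 1 - (j.+1)%:R / KK else 0).
  apply: eq_bigr => a _; under eq_bigr do rewrite htR.
  case: ifP => hai.
    transitivity (\sum_(b : 'I_k) (if b == jj j then 1 - (j.+1)%:R / KK else 0));
      last exact: sum_eqF.
    apply: eq_bigr => b _; rewrite andbT.
    have -> : (b == jj j) = (val b == j) by rewrite -val_eqE jE.
    by [].
  by rewrite big1 // => b _; rewrite andbF.
rewrite sum_eq1 sum_le_cst /Bij; congr (_ + _ * _); congr (_ %:R); lia.
Qed.

End RCost.
End Grid.

Section Aux.
Local Open Scope ring_scope.
Lemma rank_sub (m1 n1 m2 n2 : nat) (f : 'I_m2 -> 'I_m1) (g : 'I_n2 -> 'I_n1)
  (A : 'M[rat]_(m1, n1)) : (\rank (rowsub f (colsub g A)) <= \rank A)%N.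
Proof.
rewrite rowsubE; apply: leq_trans (mxrankM_maxr _ _) _.
have -> : colsub g A = (rowsub g A^T)^T by apply/matrixP => x y; rewrite !mxE.
rewrite mxrank_tr rowsubE; apply: leq_trans (mxrankM_maxr _ _) _.
by rewrite mxrank_tr.
Qed.

Lemma setDDQ (T : finType) (Q S : {set T}) : S \subset Q -> Q :\: (Q :\: S) = S.
Proof.
move/subsetP => h; apply/setP => x; rewrite !inE.
case xS: (x \in S) => /=; first by rewrite h.
by case: (x \in Q).
Qed.

End Aux.

Section Final.
Local Open Scope ring_scope.
Variable n : nat.
Local Notation k := n.+3.

Lemma cutset_compl (W : {set gvert k}) : cutset (~: W) = cutset W.
Proof. by apply/setP => e; rewrite !inE; case: (_ \in W); case: (_ \in W). Qed.

Lemma cutp_compl (W : {set gvert k}) p : cutp (~: W) p = cutp W p.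
Proof. by rewrite /cutp !inE; case: (_ \in W); case: (_ \in W). Qed.

Lemma Sij_sub i j : Sij n i j \subset terminals k.
Proof. by apply/subsetP => -[x|[b|a]]; rewrite !inE. Qed.

Lemma RQ i j : Rij n i j :&: terminals k = Sij n i j.
Proof. by apply/setP => -[[a b]|[b|a]]; rewrite !inE /= ?andbF ?andbT. Qed.

Lemma cut_facts i j (hi : (i.+1 < k)%N) (hj : (j.+1 < k)%N) (W : {set gvert k}) :
  min_sep_cut (Sij n i j) W ->
  cutp W (VP (ii n i) (jj n j)) /\
  (forall a b : 'I_k, (a.+1 < k)%N -> (b.+1 < k)%N -> (j <= b)%N ->
     (a != i :> nat) || (b != j :> nat) -> ~~ cutp W (VP a b)).
Proof.
case=> hsep hmin.
have hR : cutcost W <= Bij n i j.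
  rewrite -(FR hi hj) -cutcostE; apply: hmin.
  by rewrite /separating RQ eqxx.
case/orP: hsep => /eqP hW.
  by apply: (main_cut hi hj hW); rewrite -cutcostE.
have hX : ~: W :&: terminals k = Sij n i j.
  apply/setP => x; have hs := subsetP (Sij_sub i j) x.
  move/setP: hW => /(_ x); rewrite in_setI in_setD in_setI in_setC => hx.
  move: hs hx; case: (x \in W); case: (x \in terminals k); case: (x \in Sij n i j) => //=; by move=> /(_ isT).
have hB : Fd (~: W) <= Bij n i j by rewrite -cutcostE /cutcost cutset_compl.
have [h1 h2] := main_cut hi hj hX hB.
split; first by rewrite -cutp_compl.
by move=> a b ha hb hjb hne; rewrite -cutp_compl; apply: h2.
Qed.

End Final.

Lemma sep_compl n (S W : {set gvert n.+3}) : S \subset terminals _ ->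
  separating (terminals _ :\: S) W = separating S W.
Proof. by move=> h; rewrite /separating setDDQ // orbC. Qed.

Unset Implicit Arguments.
Set Strict Implicit.

Theorem lemma3p8 (k : nat) (hk : (3 <= k)%N)
  (m : nat) (S : 'I_m -> {set gvert k}) (W : 'I_m -> {set gvert k})
  (hS : forall t, nontrivial_bip (S t))
  (hdist : forall t t', t != t' ->
     S t != S t' /\ S t != terminals k :\: S t')
  (hcover : forall S' : {set gvert k}, nontrivial_bip S' ->
     exists t, S' = S t \/ S' = terminals k :\: S t)
  (hW : forall t, min_sep_cut (S t) (W t)) :
  ((k - 1) ^ 2 <= \rank (incidence_mx W))%N.
Proof.
move: S W hS hdist hcover hW; case: k hk => [|[|[|n]]] // _ S W hS _ hcover hW.
pose d := n.+2.
have -> : ((n.+3 - 1) ^ 2 = d * d)%N by rewrite subn1 -mulnn.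
have dpos : (0 < d)%N by [].
pose ix (x : 'I_(d * d)) : nat := (x %% d)%N.
pose jx (x : 'I_(d * d)) : nat := (x %/ d)%N.
have ixlt x : (ix x < d)%N by rewrite ltn_pmod.
have jxlt x : (jx x < d)%N by rewrite ltn_divLR.
have hc x : exists t, (Sij n (ix x) (jx x) == S t) || (Sij n (ix x) (jx x) == terminals _ :\: S t).
  have hnt : nontrivial_bip (Sij n (ix x) (jx x)).
    split; first exact: Sij_sub.
    split; first by apply/set0Pn; exists (inr (inl ord0)); rewrite inE.
    apply/eqP => e; have : (inr (inl ord_max) : gvert n.+3) \in Sij n (ix x) (jx x).
      by rewrite e inE.
    by rewrite inE /=; have := jxlt x; rewrite /d; lia.
  by have [t ht] := hcover _ hnt; exists t; case: ht => ->; rewrite eqxx ?orbT.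
pose tsel x := xchoose (hc x).
have tselP x : min_sep_cut (Sij n (ix x) (jx x)) (W (tsel x)).
  case/orP: (xchooseP (hc x)) => /eqP e; first by rewrite e; exact: hW.
  have [sub _] := hS (tsel x).
  have e' : S (tsel x) = terminals _ :\: Sij n (ix x) (jx x) by rewrite e setDDQ.
  move: (hW (tsel x)); rewrite e' /min_sep_cut sep_compl ?Sij_sub // => -[h1 h2].
  by split=> // W' hW'; apply: h2; rewrite sep_compl ?Sij_sub.
pose e0 : gedge n.+3 := Sub (fI (inr (inl ord0))) (@fI_edge n (inr (inl ord0)) isT).
pose vedge (y : 'I_(d * d)) : gedge n.+3 := insubd e0 (VP (inord (ix y)) (inord (jx y))).
have vedgeE y : val (vedge y) = VP (inord (ix y)) (inord (jx y)).
  rewrite /vedge insubdK //.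
  have := @fI_edge n (inl ((inord (ix y), inord (jx y)), false)); apply.
  by rewrite /= inordK //; have := ixlt y; rewrite /d; lia.
pose csel y := enum_rank (vedge y).
pose B := rowsub tsel (colsub csel (incidence_mx W)).
have Bentry x y : B x y = (((cutp (W (tsel x)) (VP (inord (ix y)) (inord (jx y)))) : nat)%:R)%R.
  by rewrite !mxE enum_rankK inE vedgeE.
apply: leq_trans (rank_sub tsel csel (incidence_mx W)).
have trig : is_trig_mx B.
  apply/is_trig_mxP => x y hxy; rewrite Bentry.
  have hi : ((ix x).+1 < n.+3)%N by have := ixlt x; rewrite /d; lia.
  have hj : ((jx x).+1 < n.+3)%N by have := jxlt x; rewrite /d; lia.
  have [_ h2] := cut_facts hi hj (tselP x).
  rewrite (negbTE (h2 _ _ _ _ _ _)) //.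
  - by rewrite inordK //; have := ixlt y; rewrite /d; lia.
  - by rewrite inordK //; have := jxlt y; rewrite /d; lia.
  - by rewrite inordK; [apply: leq_div2r; exact: ltnW | have := jxlt y; rewrite /d; lia].
  - rewrite !inordK; [|have := jxlt y; rewrite /d; lia|have := ixlt y; rewrite /d; lia].
    rewrite -negb_and; apply/negP => /andP [/eqP e1 /eqP e2].
    have exy : (x = y :> nat).
      rewrite (divn_eq x d) (divn_eq y d).
      by move: e1 e2; rewrite /ix /jx => -> ->.
    by move: hxy; rewrite ltn_neqAle exy eqxx.
have rk : \rank B = (d * d)%N.
  rewrite mxrank_unit // unitmxE (det_trig trig).
  rewrite big1 ?unitr1 // => x _.
  rewrite Bentry.
  have hi : ((ix x).+1 < n.+3)%N by have := ixlt x; rewrite /d; lia.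
  have hj : ((jx x).+1 < n.+3)%N by have := jxlt x; rewrite /d; lia.
  by have [h1 _] := cut_facts hi hj (tselP x); rewrite h1.
by rewrite -/B rk.
Qed.
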